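(* Let $M=L_1\,C_1\,L_2\,C_2\,L_3$ be a unitary on $\mathbb{C}^2\otimes\mathbb{C}^2\otimes\mathbb{C}^2$, where $L_1,L_2,L_3$ are local unitaries (each of the form $V\otimes W\otimes X$ with $V,W,X$ $2\times2$ unitaries), and each $C_k$ is a CNOT gate acting on some ordered pair of distinct qubits among $A,B,C$ (one qubit as control, another as target) and as the identity on the remaining qubit. Then $\mathrm{sr}(M)\in\{1,2,4\}$.
   Context: $T=|0\rangle\langle0|\otimes I_2+|1\rangle\langle1|\otimes\sigma_1$ is the CNOT gate on two qubits (first control, second target), where $\sigma_1=\begin{bmatrix}0&1\\1&0\end{bmatrix}$. For a matrix $U$ on $\mathbb{C}^2\otimes\mathbb{C}^2\otimes\mathbb{C}^2$ (systems $A,B,C$), its Schmidt rank $\mathrm{sr}(U)$ is the least integer $r$ such that $U=\sum_{j=1}^r A_j\otimes B_j\otimes C_j$ with $A_j,B_j,C_j$ complex $2\times 2$ matrices (i.e. the tensor rank of $U$). *)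

(* Defs.v *)
From HB Require Import structures.
From mathcomp Require Import all_boot all_order all_algebra.
From mathcomp Require Import complex mxtens.
From mathcomp Require Import reals.
Set Implicit Arguments. Unset Strict Implicit. Unset Printing Implicit Defensive.
Import Order.TTheory GRing.Theory Num.Theory.
Local Open Scope ring_scope.

Section Defs.
Variable R : realType.
Local Notation C := (complex R).

(* Operators on C^2 (x) C^2 (x) C^2, systems A, B, C in this order. *)
Definition tens3 (A B D : 'M[C]_2) : 'M[C]_(2 * 2 * 2) := (A *t B) *t D.

Definition adjoint2 (V : 'M[C]_2) : 'M[C]_2 := (map_mx Num.conj V)^T.
Definition unitary2 (V : 'M[C]_2) : Prop := V *m adjoint2 V = 1%:M.

Definition local_unitary (L : 'M[C]_(2 * 2 * 2)) : Prop :=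
  exists V W X : 'M[C]_2,
    [/\ unitary2 V, unitary2 W, unitary2 X & L = tens3 V W X].

Definition proj0 : 'M[C]_2 := \matrix_(i, j) (if (i == 0) && (j == 0) then 1 else 0).
Definition proj1 : 'M[C]_2 := \matrix_(i, j) (if (i == 1) && (j == 1) then 1 else 0).
Definition sigma1 : 'M[C]_2 := \matrix_(i, j) (if i != j then 1 else 0).

(* CNOT with control qubit c and target qubit t (qubits 0,1,2 = A,B,C),
   identity on the remaining qubit:
   |0><0|_c (x) I  +  |1><1|_c (x) sigma1_t  (tensor factors in order A,B,C) *)
Definition cnot3 (c t : 'I_3) : 'M[C]_(2 * 2 * 2) :=
  let f (k : 'I_3) := if k == c then proj0 else 1%:M in
  let g (k : 'I_3) := if k == c then proj1 else if k == t then sigma1 else 1%:M in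
  tens3 (f 0) (f 1) (f 2%:R) + tens3 (g 0) (g 1) (g 2%:R).

Definition tensor_decomp (U : 'M[C]_(2 * 2 * 2)) (r : nat) : Prop :=
  exists (A B D : 'I_r -> 'M[C]_2), U = \sum_(j < r) tens3 (A j) (B j) (D j).

Definition schmidt_rank_is (U : 'M[C]_(2 * 2 * 2)) (r : nat) : Prop :=
  tensor_decomp U r /\ forall r', tensor_decomp U r' -> (r <= r')%N.

End Defs.

Arguments cnot3 {R} c t.
Arguments proj0 {R}. Arguments proj1 {R}. Arguments sigma1 {R}.

(* Main.v *)
Require Import Defs.
From HB Require Import structures.
From mathcomp Require Import all_boot all_order all_algebra.
From mathcomp Require Import complex mxtens.
From mathcomp Require Import reals.
From mathcomp.algebra_tactics Require Import ring.
Set Implicit Arguments. Unset Strict Implicit. Unset Printing Implicit Defensive.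
Import GRing.Theory Num.Theory.
Local Open Scope ring_scope.

Section S.
Variable R : realType.
Local Notation C := (complex R).
Local Notation M2 := 'M[C]_2.

Definition tens3f (x : 'I_3 -> M2) : 'M[C]_(2*2*2) := tens3 (x 0) (x 1) (x 2%:R).

Lemma tensmxDl m n p q (A1 A2 : 'M[C]_(m,n)) (B : 'M[C]_(p,q)) :
  (A1 + A2) *t B = A1 *t B + A2 *t B.
Proof. by apply/matrixP=> i j; rewrite !mxE mulrDl. Qed.
Lemma tensmxDr m n p q (A : 'M[C]_(m,n)) (B1 B2 : 'M[C]_(p,q)) :
  A *t (B1 + B2) = A *t B1 + A *t B2.
Proof. by apply/matrixP=> i j; rewrite !mxE mulrDr. Qed.
Lemma tensmxZl m n p q c (A : 'M[C]_(m,n)) (B : 'M[C]_(p,q)) :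
  (c *: A) *t B = c *: (A *t B).
Proof. by apply/matrixP=> i j; rewrite !mxE mulrA. Qed.
Lemma tensmxZr m n p q c (A : 'M[C]_(m,n)) (B : 'M[C]_(p,q)) :
  A *t (c *: B) = c *: (A *t B).
Proof. by apply/matrixP=> i j; rewrite !mxE mulrCA. Qed.

Lemma tr_tensmx m n (A : 'M[C]_m) (B : 'M[C]_n) : \tr (A *t B) = \tr A * \tr B.
Proof.
rewrite /mxtrace mulr_sum; apply: eq_bigr => i _; by rewrite !mxE.
Qed.

Lemma tens11 m n : (1%:M : 'M[C]_m) *t (1%:M : 'M[C]_n) = 1%:M.
Proof.
apply/matrixP=> i j; rewrite !mxE.
case: (mxtens_indexP i) => i1 i2; case: (mxtens_indexP j) => j1 j2.
rewrite !mxtens_indexK /=.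
case: (eqVneq (mxtens_index (i1,i2)) (mxtens_index (j1,j2))) => [/(congr1 (@mxtens_unindex _ _))|].
  by rewrite !mxtens_indexK => -[-> ->]; rewrite !eqxx mulr1.
move=> ne; case: (eqVneq i1 j1) => [e1|]; last by rewrite mul0r.
case: (eqVneq i2 j2) => [e2|]; last by rewrite mulr0.
by move: ne; rewrite e1 e2 eqxx.
Qed.

Lemma ord3P (i : 'I_3) : [\/ i = 0, i = 1 | i = 2%:R].
Proof.
case: i => [[|[|[|//]]] H]; [apply: Or31|apply: Or32|apply: Or33]; exact: val_inj.
Qed.

Lemma ord3_neq : ((0 : 'I_3) == 1) = false /\ ((0 : 'I_3) == 2%:R) = false /\ ((1 : 'I_3) == 2%:R) = false.
Proof. by []. Qed.

Definition upd (x : 'I_3 -> M2) (i : 'I_3) (A : M2) := fun j => if j == i then A else x j.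

Lemma tens3f_ext x y : (forall i, x i = y i) -> tens3f x = tens3f y.
Proof. by move=> H; rewrite /tens3f !H. Qed.

Lemma tens3f_mul x y : tens3f x *m tens3f y = tens3f (fun i => x i *m y i).
Proof. by rewrite /tens3f /tens3 !tensmx_mul. Qed.

Lemma tr_tens3f x : \tr (tens3f x) = \tr (x 0) * \tr (x 1) * \tr (x 2%:R).
Proof. by rewrite /tens3f /tens3 !tr_tensmx. Qed.

Lemma tens3f1 : tens3f (fun _ => 1%:M) = 1%:M.
Proof. by rewrite /tens3f /tens3 !tens11. Qed.

Lemma tens3f_updD x i A B :
  tens3f (upd x i (A + B)) = tens3f (upd x i A) + tens3f (upd x i B).
Proof.
rewrite /tens3f /upd /tens3; case: (ord3P i) => ->; rewrite /= ?tensmxDr ?tensmxDl //.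
Qed.

Lemma tens3f_updZ x i c A :
  tens3f (upd x i (c *: A)) = c *: tens3f (upd x i A).
Proof.
rewrite /tens3f /upd /tens3; case: (ord3P i) => ->; rewrite /= ?tensmxZr ?tensmxZl //.
Qed.

Lemma tens3f_upd0 x i : tens3f (upd x i 0) = 0.
Proof.
rewrite /tens3f /upd /tens3; case: (ord3P i) => ->; rewrite /= ?tens0mx ?tensmx0 ?tens0mx //.
Qed.

Lemma tens3f_updN x i A : tens3f (upd x i (- A)) = - tens3f (upd x i A).
Proof. by rewrite -scaleN1r tens3f_updZ scaleN1r. Qed.

Lemma tens3f_upd_sum x i n (F : 'I_n -> M2) :
  tens3f (upd x i (\sum_(j < n) F j)) = \sum_(j < n) tens3f (upd x i (F j)).
Proof.
elim: n F => [|n IH] F; first by rewrite !big_ord0 tens3f_upd0.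
by rewrite !big_ord_recr /= tens3f_updD IH.
Qed.

Lemma tens3f_upd_id x i : tens3f x = tens3f (upd x i (x i)).
Proof. by apply: tens3f_ext => j; rewrite /upd; case: eqP => // ->. Qed.

Lemma tens3f_zero x i : x i = 0 -> tens3f x = 0.
Proof. by move=> H; rewrite (tens3f_upd_id x i) H tens3f_upd0. Qed.

Lemma prod3E (h : 'I_3 -> C) : \prod_(i < 3) h i = h 0 * h 1 * h 2%:R.
Proof.
rewrite !big_ord_recr big_ord0 /= mul1r; congr (h _ * h _ * h _); exact: val_inj.
Qed.

Lemma tens3_f A B D : tens3 A B D = tens3f (fun i => if i == 0 then A else if i == 1 then B else D).
Proof. by []. Qed.

Lemma mxtrace_sum n r (F : 'I_r -> 'M[C]_n) : \tr (\sum_(j < r) F j) = \sum_(j < r) \tr (F j).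
Proof.
elim: r F => [|r IH] F; first by rewrite !big_ord0 mxtrace0.
by rewrite !big_ord_recr mxtraceD IH.
Qed.

Lemma lower_bound (U : 'M[C]_(2*2*2)) m (X : 'I_m -> M2) (Y : 'I_m -> 'I_3 -> M2) (k : 'I_3) r :
  (\matrix_(p, q) \tr (tens3f (upd (Y q) k (X p)) *m U)) \in unitmx ->
  tensor_decomp U r -> (m <= r)%N.
Proof.
move=> Hu [A [B [D EU]]]; rewrite EU in Hu.
set a := fun j (i : 'I_3) => if i == 0 then A j else if i == 1 then B j else D j.
pose Cm : 'M[C]_(m, r) := \matrix_(p, j) \tr (X p *m a j k).
pose Gm : 'M[C]_(r, m) := \matrix_(j, q) \prod_(i < 3 | i != k) \tr (Y q i *m a j i).
have E : \matrix_(p, q) \tr (tens3f (upd (Y q) k (X p)) *m \sum_(j < r) tens3 (A j) (B j) (D j))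
   = Cm *m Gm.
  apply/matrixP => p q; rewrite !mxE mulmx_sumr mxtrace_sum; apply: eq_bigr => j _.
  rewrite tens3_f tens3f_mul tr_tens3f -(prod3E (fun i => \tr (upd (Y q) k (X p) i *m a j i))).
  rewrite (bigD1 k) //= !mxE /upd eqxx; congr (_ * _); apply: eq_bigr => i /negbTE ->.
  by [].
have := mxrank_unit Hu; rewrite E => <-.
exact: leq_trans (mxrankM_maxl _ _) (rank_leq_col _).
Qed.

Notation i0 := (@ord0 1).
Notation i1 := (@ord_max 1).
Lemma ord2P (i : 'I_2) : i = i0 \/ i = i1.
Proof. case: i => [[|[|//]] H]; [left|right]; exact: val_inj. Qed.

Definition Pm (a : 'I_2) : M2 := delta_mx a a.
Definition Zm (a : 'I_2) : M2 := diag_mx (\row_(i < 2) (-1) ^+ (a * i)).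
Definition Hm : M2 := \matrix_(i, j) (-1) ^+ (i * j).
Definition Hh : M2 := 2^-1 *: Hm.

Lemma two_neq0 : (2%:R : C) != 0.
Proof. by rewrite pnatr_eq0. Qed.

Lemma sum2 (V : nmodType) (F : 'I_2 -> V) : \sum_(i < 2) F i = F i0 + F i1.
Proof. by rewrite !big_ord_recr big_ord0 /= add0r; congr (F _ + F _); apply: val_inj. Qed.

Ltac m22 := apply/matrixP; let i := fresh "i" in let j := fresh "j" in intros i j;
  case: (ord2P i) => ->; case: (ord2P j) => ->; rewrite ?(mxE, sum2) /=.

Lemma Zm0 : Zm 0 = 1%:M. Proof. by m22. Qed.
Lemma HZH0 : Hm *m Zm 0 *m Hh = 1%:M.
Proof. by m22; field. Qed.
Lemma HZH1 : Hm *m Zm i1 *m Hh = sigma1.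
Proof. by m22; field. Qed.

Definition T3 (k o : 'I_3) (A B : M2) := tens3f (fun i => if i == k then A else if i == o then B else 1%:M).

Lemma T3Dl k o A1 A2 B : T3 k o (A1 + A2) B = T3 k o A1 B + T3 k o A2 B.
Proof. exact: tens3f_updD. Qed.
Lemma T3Nl k o A B : T3 k o (- A) B = - T3 k o A B.
Proof. exact: tens3f_updN. Qed.
Lemma T3Zl k o c A B : T3 k o (c *: A) B = c *: T3 k o A B.
Proof. exact: tens3f_updZ. Qed.
Lemma T3Bl k o A1 A2 B : T3 k o (A1 - A2) B = T3 k o A1 B - T3 k o A2 B.
Proof. by rewrite T3Dl T3Nl. Qed.

Lemma T3_r k o A B : k != o ->
  T3 k o A B = tens3f (upd (fun i => if i == k then A else 1%:M) o B).
Proof.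
move=> ko; apply: tens3f_ext => i; rewrite /upd.
case: eqP => [->|]; first by rewrite (negbTE ko).
by case: eqP.
Qed.
Lemma T3Dr k o A B1 B2 : k != o -> T3 k o A (B1 + B2) = T3 k o A B1 + T3 k o A B2.
Proof. by move=> ko; rewrite !T3_r // tens3f_updD. Qed.
Lemma T3Nr k o A B : k != o -> T3 k o A (- B) = - T3 k o A B.
Proof. by move=> ko; rewrite !T3_r // tens3f_updN. Qed.
Lemma T3Zr k o c A B : k != o -> T3 k o A (c *: B) = c *: T3 k o A B.
Proof. by move=> ko; rewrite !T3_r // tens3f_updZ. Qed.
Lemma T3Br k o A B1 B2 : k != o -> T3 k o A (B1 - B2) = T3 k o A B1 - T3 k o A B2.
Proof. by move=> ko; rewrite T3Dr // T3Nr. Qed.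

Lemma cnot3E c t : cnot3 c t = tens3f (fun k => if k == c then proj0 else 1%:M)
   + tens3f (fun k => if k == c then proj1 else if k == t then sigma1 else 1%:M).
Proof. by []. Qed.

Lemma proj0E : proj0 = Pm i0. Proof. by m22. Qed.
Lemma proj1E : proj1 = Pm i1. Proof. by m22. Qed.
Lemma Zm0E : Zm i0 = Pm i0 + Pm i1. Proof. by m22; ring. Qed.
Lemma Zm1E : Zm i1 = Pm i0 - Pm i1. Proof. by m22; ring. Qed.
Lemma QsumE : Hm *m Pm i0 *m Hh + Hm *m Pm i1 *m Hh = 1%:M.
Proof. by m22; field. Qed.
Lemma QdifE : Hm *m Pm i0 *m Hh - Hm *m Pm i1 *m Hh = sigma1.
Proof. by m22; field. Qed.

Lemma cnot_ctrl c t : c != t -> cnot3 c t =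
  \sum_(a < 2) tens3f (fun i => if i == c then Pm a else if i == t then Hm *m Zm a *m Hh else 1%:M).
Proof.
move=> ct; rewrite cnot3E sum2 HZH0 HZH1 -proj0E -proj1E; congr (_ + _).
by apply: tens3f_ext => i; case: (i == c) => //; case: (i == t).
Qed.

Lemma cnot_targ c t : c != t -> cnot3 c t =
  \sum_(a < 2) tens3f (fun i => if i == t then Hm *m Pm a *m Hh else if i == c then Zm a else 1%:M).
Proof.
move=> ct.
have E : forall a, tens3f (fun i => if i == t then Hm *m Pm a *m Hh else if i == c then Zm a else 1%:M)
   = T3 c t (Zm a) (Hm *m Pm a *m Hh).
  move=> a; apply: tens3f_ext => i; case: eqP => [->|//]; by rewrite eq_sym (negbTE ct).
rewrite sum2 !E Zm0E Zm1E !T3Dl T3Nl cnot3E.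
have -> : tens3f (fun k => if k == c then proj0 else 1%:M) = T3 c t (Pm i0) 1%:M.
  by rewrite /T3 proj0E; apply: tens3f_ext => i; case: (i == c) => //; case: (i == t).
have -> : tens3f (fun k => if k == c then proj1 else if k == t then sigma1 else 1%:M) = T3 c t (Pm i1) sigma1.
  by rewrite /T3 proj1E.
rewrite -QsumE -QdifE !(T3Dr _ _ _ ct) (T3Nr _ _ ct).
exact: addrACA.
Qed.

End S.
Section S2.
Variable R : realType.
Local Notation C := (complex R).
Local Notation M2 := 'M[C]_2.
Local Notation i0 := (@ord0 1).
Local Notation i1 := (@ord_max 1).
Local Notation tens3f := (@tens3f R).
Local Notation T3 := (@T3 R).
Local Notation Pm := (@Pm R).
Local Notation Zm := (@Zm R).
Local Notation Hm := (@Hm R).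
Local Notation Hh := (@Hh R).

Ltac m22 := apply/matrixP; let i := fresh "i" in let j := fresh "j" in intros i j;
  case: (ord2P i) => ->; case: (ord2P j) => ->; rewrite ?(mxE, sum2) /=.

Lemma tr_test (Y : 'I_3 -> M2) k X x :
  \tr (tens3f (upd Y k X) *m tens3f x) = \tr (X *m x k) * \prod_(i < 3 | i != k) \tr (Y i *m x i).
Proof.
rewrite tens3f_mul tr_tens3f -(prod3E (fun i => \tr (upd Y k X i *m x i))).
rewrite (bigD1 k) //= /upd eqxx; congr (_ * _); apply: eq_bigr => i /negbTE ->.
by [].
Qed.

Lemma prod_distinct (h : 'I_3 -> C) k a b : k != a -> k != b -> a != b ->
  \prod_(i < 3 | i != k) h i = h a * h b.
Proof.
move=> ka kb ab; rewrite big_mkcond prod3E.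
case: (ord3P k) => Ek; case: (ord3P a) => Ea; case: (ord3P b) => Eb;
  rewrite Ek Ea Eb in ka kb ab *; rewrite //= ?mul1r ?mulr1 //; exact: mulrC.
Qed.

Lemma trdd (i j a b : 'I_2) : \tr (delta_mx j i *m (delta_mx a b : M2)) = ((i == a) && (j == b))%:R.
Proof.
rewrite /mxtrace sum2 !mxE !sum2 !mxE.
by case: (ord2P i) => ->; case: (ord2P j) => ->; case: (ord2P a) => ->; case: (ord2P b) => ->;
  rewrite /= ?mulr0 ?mul0r ?mulr1 ?addr0 ?add0r.
Qed.

Lemma PuP (a b : 'I_2) (u : M2) : Pm a *m u *m Pm b = u a b *: delta_mx a b.
Proof.
apply/matrixP => i j; rewrite !mxE !sum2 !mxE !sum2 !mxE.
by case: (ord2P i) => ->; case: (ord2P j) => ->; case: (ord2P a) => ->; case: (ord2P b) => ->;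
  rewrite /= ?mulr0 ?mul0r ?mulr1 ?mul1r ?addr0 ?add0r.
Qed.

Lemma sum_delta2 (c d : 'I_2) (F : 'I_2 -> 'I_2 -> C) :
  \sum_(a < 2) \sum_(b < 2) (((c == a) && (d == b))%:R * F a b) = F c d.
Proof.
rewrite !sum2.
by case: (ord2P c) => ->; case: (ord2P d) => ->; rewrite /= ?mul0r ?mul1r ?addr0 ?add0r.
Qed.

Lemma T3_suml k o n (F : 'I_n -> M2) B : T3 k o (\sum_(j < n) F j) B = \sum_(j < n) T3 k o (F j) B.
Proof. exact: tens3f_upd_sum. Qed.

Lemma T3_sumr k o n (F : 'I_n -> M2) A : k != o -> T3 k o A (\sum_(j < n) F j) = \sum_(j < n) T3 k o A (F j).
Proof.
move=> ko; rewrite T3_r // tens3f_upd_sum; apply: eq_bigr => j _; by rewrite T3_r.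
Qed.

Definition Ksum k o (K : 'I_2 -> 'I_2 -> 'I_2 -> 'I_2 -> C) :=
  \sum_(a < 2) \sum_(b < 2) \sum_(c < 2) \sum_(d < 2) K a b c d *: T3 k o (delta_mx a b) (delta_mx c d).

Lemma T3_expand k o (al be : 'I_2 -> 'I_2 -> C) : k != o ->
  T3 k o (\sum_(a < 2) \sum_(b < 2) al a b *: delta_mx a b) (\sum_(c < 2) \sum_(d < 2) be c d *: delta_mx c d)
  = Ksum k o (fun a b c d => al a b * be c d).
Proof.
move=> ko; rewrite T3_suml; apply: eq_bigr => a _; rewrite T3_suml; apply: eq_bigr => b _.
rewrite T3Zl T3_sumr // scaler_sumr; apply: eq_bigr => c _; rewrite T3_sumr // scaler_sumr.
by apply: eq_bigr => d _; rewrite T3Zr // scalerA.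
Qed.

Lemma td_sum r (x : 'I_r -> 'I_3 -> M2) : tensor_decomp (\sum_(j < r) tens3f (x j)) r.
Proof. by exists (fun j => x j 0), (fun j => x j 1), (fun j => x j 2%:R). Qed.

Lemma decomp_K k o r (K : 'I_2 -> 'I_2 -> 'I_2 -> 'I_2 -> C) (al be : 'I_r -> 'I_2 -> 'I_2 -> C) :
  k != o -> (forall a b c d, K a b c d = \sum_(j < r) al j a b * be j c d) ->
  tensor_decomp (Ksum k o K) r.
Proof.
move=> ko HK.
have -> : Ksum k o K = \sum_(j < r) T3 k o (\sum_(a < 2) \sum_(b < 2) al j a b *: delta_mx a b)
      (\sum_(c < 2) \sum_(d < 2) be j c d *: delta_mx c d).
  under [RHS]eq_bigr do rewrite T3_expand //.
  rewrite /Ksum; symmetry; rewrite exchange_big; apply: eq_bigr => a _.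
  rewrite exchange_big; apply: eq_bigr => b _.
  rewrite exchange_big; apply: eq_bigr => c _.
  rewrite exchange_big; apply: eq_bigr => d _.
  by rewrite -scaler_suml HK.
exact: td_sum.
Qed.


Lemma trmul_sum n (A : 'M[C]_(2*2*2)) (F : 'I_n -> 'M[C]_(2*2*2)) :
  \tr (A *m \sum_(j < n) F j) = \sum_(j < n) \tr (A *m F j).
Proof. by rewrite mulmx_sumr mxtrace_sum. Qed.

Lemma trmulZ (A B : 'M[C]_(2*2*2)) c : \tr (A *m (c *: B)) = c * \tr (A *m B).
Proof. by rewrite -scalemxAr mxtraceZ. Qed.

Lemma tr_half1 : \tr ((2^-1 *: 1%:M : M2) *m 1%:M) = 1.
Proof. by rewrite mulmx1 mxtraceZ mxtrace1 mulVf // pnatr_eq0. Qed.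

Lemma lb_Ksum k o z m (s t : 'I_m -> 'I_2 * 'I_2) K r :
  k != o -> k != z -> o != z ->
  (\matrix_(p, q) K (s p).1 (s p).2 (t q).1 (t q).2) \in unitmx ->
  tensor_decomp (Ksum k o K) r -> (m <= r)%N.
Proof.
move=> ko kz oz Hu; apply: (lower_bound (X := fun p => delta_mx (s p).2 (s p).1)
  (Y := fun q i => if i == o then delta_mx (t q).2 (t q).1 else 2^-1 *: 1%:M) (k := k)).
suff -> : \matrix_(p, q) \tr (tens3f (upd (fun i => if i == o then delta_mx (t q).2 (t q).1 else 2^-1 *: 1%:M) k
        (delta_mx (s p).2 (s p).1)) *m Ksum k o K) =
   \matrix_(p, q) K (s p).1 (s p).2 (t q).1 (t q).2 by [].
apply/matrixP => p q; rewrite !mxE /Ksum.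
transitivity (\sum_(a < 2) \sum_(b < 2) (((s p).1 == a) && ((s p).2 == b))%:R *
   (\sum_(c < 2) \sum_(d < 2) (((t q).1 == c) && ((t q).2 == d))%:R * K a b c d)).
  rewrite trmul_sum; apply: eq_bigr => a _; rewrite trmul_sum; apply: eq_bigr => b _.
  rewrite trmul_sum mulr_sumr; apply: eq_bigr => c _; rewrite trmul_sum mulr_sumr; apply: eq_bigr => d _.
  have ok : (o == k) = false by rewrite eq_sym (negbTE ko).
  have zk : (z == k) = false by rewrite eq_sym (negbTE kz).
  have zo : (z == o) = false by rewrite eq_sym (negbTE oz).
  rewrite trmulZ /T3 tr_test (prod_distinct _ ko kz oz) /= !eqxx ok zk zo tr_half1 !trdd; ring.
under eq_bigr => a _ do under eq_bigr => b _ do rewrite (sum_delta2 (t q).1 (t q).2 (K a b)).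
exact: (sum_delta2 (s p).1 (s p).2 (fun a b => K a b (t q).1 (t q).2)).
Qed.


Definition sg (a c : 'I_2) : C := if (a == i1) && (c == i1) then -1 else 1.

Lemma sgE (a c : 'I_2) : (-1) ^+ (a * c) = sg a c.
Proof. by case: (ord2P a) => ->; case: (ord2P c) => ->; rewrite /sg /= ?mul0n ?muln0 ?mul1n ?expr0 ?expr1. Qed.

Lemma ZWZ (a b c d : 'I_2) (W : M2) : (Zm a *m W *m Zm b) c d = sg a c * W c d * sg b d.
Proof. by rewrite /Zm mul_mx_diag mul_diag_mx !mxE !sgE. Qed.

Definition Sg m (s t : 'I_m -> 'I_2 * 'I_2) : 'M[C]_m :=
  \matrix_(p, q) (sg (s p).1 (t q).1 * sg (s p).2 (t q).2).

Lemma Nunit m (s t : 'I_m -> 'I_2 * 'I_2) (u W : M2) :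
  (forall p, u (s p).1 (s p).2 != 0) -> (forall q, W (t q).1 (t q).2 != 0) ->
  Sg s t *m (Sg s t)^T = m%:R *: 1%:M -> (0 < m)%N ->
  \matrix_(p, q) (u (s p).1 (s p).2 * (Zm (s p).1 *m W *m Zm (s p).2) (t q).1 (t q).2) \in unitmx.
Proof.
move=> Hu HW HS m0.
have -> : \matrix_(p, q) (u (s p).1 (s p).2 * (Zm (s p).1 *m W *m Zm (s p).2) (t q).1 (t q).2) =
  diag_mx (\row_p u (s p).1 (s p).2) *m Sg s t *m diag_mx (\row_q W (t q).1 (t q).2).
  apply/matrixP => p q; rewrite [in LHS]mxE ZWZ mul_mx_diag mul_diag_mx !mxE; ring.
have dU : forall (d : 'rV[C]_m), (forall i, d 0 i != 0) -> diag_mx d \in unitmx.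
  move=> d Hd; rewrite unitmxE det_diag unitfE; apply/prodf_neq0 => i _; exact: Hd.
rewrite !unitmx_mul !dU ?andbT => [|q|p]; last 2 first.
- by rewrite mxE.
- by rewrite mxE.
have : Sg s t *m (m%:R^-1 *: (Sg s t)^T) = 1%:M.
  rewrite -scalemxAr HS scalerA mulVf ?scale1r //; by rewrite pnatr_eq0 -lt0n.
by case/mulmx1_unit.
Qed.


Lemma ord4P (p : 'I_4) : [\/ p = @Ordinal 4 0 isT, p = @Ordinal 4 1 isT, p = @Ordinal 4 2 isT | p = @Ordinal 4 3 isT].
Proof.
case: p => [[|[|[|[|//]]]] H]; [apply: Or41|apply: Or42|apply: Or43|apply: Or44]; exact: val_inj.
Qed.

Lemma sum4 (V : nmodType) (F : 'I_4 -> V) :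
  \sum_(i < 4) F i = F (@Ordinal 4 0 isT) + F (@Ordinal 4 1 isT) + F (@Ordinal 4 2 isT) + F (@Ordinal 4 3 isT).
Proof. rewrite !big_ord_recr big_ord0 /= add0r; congr (F _ + F _ + F _ + F _); exact: val_inj. Qed.

Lemma ord1P (p : 'I_1) : p = ord0.
Proof. exact: ord1. Qed.

Definition all4 (p : 'I_4) : 'I_2 * 'I_2 := nth (i0, i0) [:: (i0,i0); (i0,i1); (i1,i0); (i1,i1)] p.

Lemma Sg4 : Sg all4 all4 *m (Sg all4 all4)^T = 4%:R *: 1%:M.
Proof.
apply/matrixP => p q; rewrite !mxE sum4 !mxE.
by case: (ord4P p) => ->; case: (ord4P q) => ->; rewrite /all4 /sg /=; ring.
Qed.


Definition K1 (u W : M2) a b c d := u a b * (Zm a *m W *m Zm b) c d.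

Definition gall (u : M2) := forall a b, u a b != 0.
Definition gdiag (u : M2) := [/\ u i0 i1 = 0, u i1 i0 = 0, u i0 i0 != 0 & u i1 i1 != 0].
Definition ganti (u : M2) := [/\ u i0 i0 = 0, u i1 i1 = 0, u i0 i1 != 0 & u i1 i0 != 0].
Definition good (u : M2) := [\/ gall u, gdiag u | ganti u].

Definition l2 (x y : 'I_2 * 'I_2) (p : 'I_2) := nth (i0, i0) [:: x; y] p.
Definition l1 (x : 'I_2 * 'I_2) (p : 'I_1) := x.


Lemma sg2 a b : sg a b * sg a b = 1.
Proof. by rewrite /sg; case: ifP => _; rewrite ?mulrNN mulr1. Qed.

Lemma Sg1 x y : Sg (l1 x) (l1 y) *m (Sg (l1 x) (l1 y))^T = 1%:R *: 1%:M.
Proof.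
apply/matrixP => p q; rewrite !mxE big_ord1 !mxE (ord1P p) (ord1P q) /l1 /=.
by rewrite mulrACA sg2 sg2 mulr1.
Qed.


Ltac sg2t := apply/matrixP; let p := fresh "p" in let q := fresh "q" in intros p q;
  rewrite !mxE sum2 !mxE; case: (ord2P p) => ->; case: (ord2P q) => ->; rewrite /l2 /sg /=; ring.

Lemma SgA : Sg (l2 (i0,i0) (i0,i1)) (l2 (i0,i0) (i1,i1)) *m (Sg (l2 (i0,i0) (i0,i1)) (l2 (i0,i0) (i1,i1)))^T = 2%:R *: 1%:M.
Proof. sg2t. Qed.
Lemma SgB : Sg (l2 (i0,i0) (i0,i1)) (l2 (i0,i1) (i1,i0)) *m (Sg (l2 (i0,i0) (i0,i1)) (l2 (i0,i1) (i1,i0)))^T = 2%:R *: 1%:M.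
Proof. sg2t. Qed.
Lemma SgC : Sg (l2 (i0,i0) (i1,i1)) (l2 (i0,i0) (i0,i1)) *m (Sg (l2 (i0,i0) (i1,i1)) (l2 (i0,i0) (i0,i1)))^T = 2%:R *: 1%:M.
Proof. sg2t. Qed.
Lemma SgD : Sg (l2 (i0,i1) (i1,i0)) (l2 (i0,i0) (i0,i1)) *m (Sg (l2 (i0,i1) (i1,i0)) (l2 (i0,i0) (i0,i1)))^T = 2%:R *: 1%:M.
Proof. sg2t. Qed.

Lemma decomp_u2 k o (u W : M2) v0 v1 : k != o -> v0 != v1 ->
  (forall a b, (a, b) != v0 -> (a, b) != v1 -> u a b = 0) -> tensor_decomp (Ksum k o (K1 u W)) 2.
Proof.
move=> ko v01 Hz.
apply: (decomp_K (al := fun j a b => (((a, b) == l2 v0 v1 j))%:R * u a b)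
   (be := fun j c d => sg (l2 v0 v1 j).1 c * W c d * sg (l2 v0 v1 j).2 d)) => // a b c d.
rewrite sum2 /l2 /= /K1 ZWZ.
case: (eqVneq (a, b) v0) => [E|n0].
  have : (a, b) != v1 by rewrite E.
  move/negbTE => ->; rewrite -E /=; ring.
case: (eqVneq (a, b) v1) => [E|n1].
  rewrite -E /=; ring.
by rewrite Hz //; ring.
Qed.

Lemma decomp_W2 k o (u W : M2) w0 w1 : k != o -> w0 != w1 ->
  (forall c d, (c, d) != w0 -> (c, d) != w1 -> W c d = 0) -> tensor_decomp (Ksum k o (K1 u W)) 2.
Proof.
move=> ko w01 Hz.
apply: (decomp_K (al := fun j a b => u a b * sg a (l2 w0 w1 j).1 * sg b (l2 w0 w1 j).2)
   (be := fun j c d => (((c, d) == l2 w0 w1 j))%:R * W c d)) => // a b c d.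
rewrite sum2 /l2 /= /K1 ZWZ.
case: (eqVneq (c, d) w0) => [E|n0].
  have : (c, d) != w1 by rewrite E.
  move/negbTE => ->; rewrite -E /=; ring.
case: (eqVneq (c, d) w1) => [E|n1].
  rewrite -E /=; ring.
by rewrite Hz //; ring.
Qed.


Lemma decomp_1 k o (u W : M2) (si si' : 'I_2 -> 'I_2 -> C) : k != o ->
  (forall a b c d, K1 u W a b c d = (u a b * si a b) * (W c d * si' c d)) ->
  tensor_decomp (Ksum k o (K1 u W)) 1.
Proof.
move=> ko H; apply: (decomp_K (al := fun j a b => u a b * si a b) (be := fun j c d => W c d * si' c d)) => //.
by move=> a b c d; rewrite big_ord1.
Qed.

Ltac brute := let a := fresh "a" in let b := fresh "b" in let c := fresh "c" in let d := fresh "d" in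
  intros a b c d; rewrite /K1 ZWZ; case: (ord2P a) => ->; case: (ord2P b) => ->;
  case: (ord2P c) => ->; case: (ord2P d) => ->.

Lemma core1 k o z (u W : M2) : k != o -> k != z -> o != z -> good u -> good W ->
  exists r, schmidt_rank_is (Ksum k o (K1 u W)) r /\ r \in [:: 1; 2; 4]%N.
Proof.
move=> ko kz oz [Hu|[u1 u2 u3 u4]|[u1 u2 u3 u4]] [HW|[w1 w2 w3 w4]|[w1 w2 w3 w4]].
- exists 4%N; split; [split|by []].
    apply: (decomp_K (al := fun j a b => (((a, b) == all4 j))%:R * u a b)
      (be := fun j c d => sg (all4 j).1 c * W c d * sg (all4 j).2 d)) => // a b c d.
    rewrite sum4 /all4 /K1 ZWZ /=.
    by case: (ord2P a) => ->; case: (ord2P b) => ->; rewrite /=; ring.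
  move=> r' Hd; apply: (lb_Ksum (s := all4) (t := all4) ko kz oz _ Hd).
  by apply: Nunit; [move=> p; exact: Hu|move=> q; exact: HW|exact: Sg4|].
- exists 2%N; split; [split|by []].
    apply: (@decomp_W2 _ _ _ _ (i0, i0) (i1, i1)) => // c d.
    by case: (ord2P c) => ->; case: (ord2P d) => ->.
  move=> r' Hd; apply: (lb_Ksum (s := l2 (i0,i0) (i0,i1)) (t := l2 (i0,i0) (i1,i1)) ko kz oz _ Hd).
  apply: Nunit; [move=> p|move=> q|exact: SgA|by []].
    by case: (ord2P p) => ->; exact: Hu.
  by case: (ord2P q) => ->.
- exists 2%N; split; [split|by []].
    apply: (@decomp_W2 _ _ _ _ (i0, i1) (i1, i0)) => // c d.
    by case: (ord2P c) => ->; case: (ord2P d) => ->.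
  move=> r' Hd; apply: (lb_Ksum (s := l2 (i0,i0) (i0,i1)) (t := l2 (i0,i1) (i1,i0)) ko kz oz _ Hd).
  apply: Nunit; [move=> p|move=> q|exact: SgB|by []].
    by case: (ord2P p) => ->; exact: Hu.
  by case: (ord2P q) => ->.
- exists 2%N; split; [split|by []].
    apply: (@decomp_u2 _ _ _ _ (i0, i0) (i1, i1)) => // a b.
    by case: (ord2P a) => ->; case: (ord2P b) => ->.
  move=> r' Hd; apply: (lb_Ksum (s := l2 (i0,i0) (i1,i1)) (t := l2 (i0,i0) (i0,i1)) ko kz oz _ Hd).
  apply: Nunit; [move=> p|move=> q|exact: SgC|by []].
    by case: (ord2P p) => ->.
  by case: (ord2P q) => ->; exact: HW.
- exists 1%N; split; [split|by []].
    apply: (decomp_1 (si := fun _ _ => 1) (si' := fun _ _ => 1)) => //.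
    by brute; rewrite /sg /= ?u1 ?u2 ?w1 ?w2; ring.
  move=> r' Hd; apply: (lb_Ksum (s := l1 (i0,i0)) (t := l1 (i0,i0)) ko kz oz _ Hd).
  by apply: Nunit; [move=> p; exact: u3|move=> q; exact: w3|exact: Sg1|].
- exists 1%N; split; [split|by []].
    apply: (decomp_1 (si := fun a _ => sg a i1) (si' := fun _ _ => 1)) => //.
    by brute; rewrite /sg /= ?u1 ?u2 ?w1 ?w2; ring.
  move=> r' Hd; apply: (lb_Ksum (s := l1 (i0,i0)) (t := l1 (i0,i1)) ko kz oz _ Hd).
  by apply: Nunit; [move=> p; exact: u3|move=> q; exact: w3|exact: Sg1|].
- exists 2%N; split; [split|by []].
    apply: (@decomp_u2 _ _ _ _ (i0, i1) (i1, i0)) => // a b.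
    by case: (ord2P a) => ->; case: (ord2P b) => ->.
  move=> r' Hd; apply: (lb_Ksum (s := l2 (i0,i1) (i1,i0)) (t := l2 (i0,i0) (i0,i1)) ko kz oz _ Hd).
  apply: Nunit; [move=> p|move=> q|exact: SgD|by []].
    by case: (ord2P p) => ->.
  by case: (ord2P q) => ->; exact: HW.
- exists 1%N; split; [split|by []].
    apply: (decomp_1 (si := fun _ _ => 1) (si' := fun c _ => sg c i1)) => //.
    by brute; rewrite /sg /= ?u1 ?u2 ?w1 ?w2; ring.
  move=> r' Hd; apply: (lb_Ksum (s := l1 (i0,i1)) (t := l1 (i0,i0)) ko kz oz _ Hd).
  by apply: Nunit; [move=> p; exact: u3|move=> q; exact: w3|exact: Sg1|].
- exists 1%N; split; [split|by []].
    apply: (decomp_1 (si := fun _ b => sg b i1) (si' := fun c _ => sg c i1)) => //.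
    by brute; rewrite /sg /= ?u1 ?u2 ?w1 ?w2; ring.
  move=> r' Hd; apply: (lb_Ksum (s := l1 (i0,i1)) (t := l1 (i0,i1)) ko kz oz _ Hd).
  by apply: Nunit; [move=> p; exact: u3|move=> q; exact: w3|exact: Sg1|].
Qed.


Definition T2t k o1 (u : M2) (ab : 'I_2 * 'I_2) :=
  tens3f (fun i => if i == k then Pm ab.1 *m u *m Pm ab.2 else if i == o1 then Zm ab.1 else Zm ab.2).
Definition T2sum k o1 (u : M2) := \sum_(a < 2) \sum_(b < 2) T2t k o1 u (a, b).

Lemma T2sumE k o1 (u : M2) : T2sum k o1 u = \sum_(j < 4) T2t k o1 u (all4 j).
Proof. by rewrite /T2sum !sum2 sum4 /all4 /= !addrA. Qed.

Lemma T2t0 k o1 (u : M2) a b : u a b = 0 -> T2t k o1 u (a, b) = 0.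
Proof. by move=> H; apply: (tens3f_zero (i := k)); rewrite /= eqxx PuP H scale0r. Qed.

Lemma trHZ (c a : 'I_2) : \tr ((2^-1 *: Zm c) *m Zm a) = (c == a)%:R.
Proof.
rewrite /mxtrace sum2 !mxE !sum2 !mxE.
by case: (ord2P c) => ->; case: (ord2P a) => ->; rewrite /= ?sgE /sg /=; field.
Qed.

Lemma lb_T2 k o1 o2 (u : M2) m (s : 'I_m -> 'I_2 * 'I_2) r :
  k != o1 -> k != o2 -> o1 != o2 ->
  (forall p q, ((((s q).1 == (s p).1) && ((s q).2 == (s p).2))%:R : C) = (p == q)%:R) ->
  (forall p, u (s p).1 (s p).2 != 0) ->
  tensor_decomp (T2sum k o1 u) r -> (m <= r)%N.
Proof.
move=> ko1 ko2 o12 Hs Hu; apply: (lower_bound (X := fun p => delta_mx (s p).2 (s p).1)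
  (Y := fun q i => if i == o1 then 2^-1 *: Zm (s q).1 else 2^-1 *: Zm (s q).2) (k := k)).
have -> : \matrix_(p, q) \tr (tens3f (upd (fun i => if i == o1 then 2^-1 *: Zm (s q).1 else 2^-1 *: Zm (s q).2) k
        (delta_mx (s p).2 (s p).1)) *m T2sum k o1 u) =
   diag_mx (\row_p u (s p).1 (s p).2).
  apply/matrixP => p q; rewrite !mxE /T2sum.
  have o1k : (o1 == k) = false by rewrite eq_sym (negbTE ko1).
  have o2k : (o2 == k) = false by rewrite eq_sym (negbTE ko2).
  have o21 : (o2 == o1) = false by rewrite eq_sym (negbTE o12).
  transitivity (\sum_(a < 2) \sum_(b < 2) (((s p).1 == a) && ((s p).2 == b))%:R *
     (u a b * ((((s q).1 == a))%:R * (((s q).2 == b))%:R))).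
    rewrite trmul_sum; apply: eq_bigr => a _; rewrite trmul_sum; apply: eq_bigr => b _.
    rewrite /T2t tr_test (prod_distinct _ ko1 ko2 o12) /= !eqxx o1k o2k o21 PuP.
    rewrite -scalemxAr mxtraceZ trdd !trHZ; ring.
  rewrite (sum_delta2 (s p).1 (s p).2 (fun a b => u a b * ((((s q).1 == a))%:R * (((s q).2 == b))%:R))).
  by rewrite -natrM mulnb Hs mulr_natr.
rewrite unitmxE det_diag unitfE; apply/prodf_neq0 => p _; rewrite mxE; exact: Hu.
Qed.


Lemma core2 k o1 o2 (u : M2) : k != o1 -> k != o2 -> o1 != o2 -> good u ->
  exists r, schmidt_rank_is (T2sum k o1 u) r /\ r \in [:: 1; 2; 4]%N.
Proof.
move=> ko1 ko2 o12 [Hu|[u1 u2 u3 u4]|[u1 u2 u3 u4]].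
- exists 4%N; split; [split|by []].
    rewrite T2sumE; exact: td_sum.
  move=> r' Hd; apply: (lb_T2 (s := all4) ko1 ko2 o12 _ _ Hd).
    by move=> p q; case: (ord4P p) => ->; case: (ord4P q) => ->.
  by move=> p; exact: Hu.
- exists 2%N; split; [split|by []].
    have -> : T2sum k o1 u = \sum_(j < 2) T2t k o1 u (l2 (i0, i0) (i1, i1) j).
      by rewrite T2sumE sum4 sum2 /all4 /l2 /= (T2t0 _ _ u1) (T2t0 _ _ u2) !addr0.
    exact: td_sum.
  move=> r' Hd; apply: (lb_T2 (s := l2 (i0, i0) (i1, i1)) ko1 ko2 o12 _ _ Hd).
    by move=> p q; case: (ord2P p) => ->; case: (ord2P q) => ->.
  by move=> p; case: (ord2P p) => ->.
- exists 2%N; split; [split|by []].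
    have -> : T2sum k o1 u = \sum_(j < 2) T2t k o1 u (l2 (i0, i1) (i1, i0) j).
      by rewrite T2sumE sum4 sum2 /all4 /l2 /= (T2t0 _ _ u1) (T2t0 _ _ u2) add0r addr0.
    exact: td_sum.
  move=> r' Hd; apply: (lb_T2 (s := l2 (i0, i1) (i1, i0)) ko1 ko2 o12 _ _ Hd).
    by move=> p q; case: (ord2P p) => ->; case: (ord2P q) => ->.
  by move=> p; case: (ord2P p) => ->.
Qed.

End S2.
Section S3.
Variable R : realType.
Local Notation C := (complex R).
Local Notation M2 := 'M[C]_2.
Local Notation i0 := (@ord0 1).
Local Notation i1 := (@ord_max 1).
Local Notation tens3f := (@tens3f R).
Local Notation Pm := (@Pm R).
Local Notation Zm := (@Zm R).
Local Notation Hm := (@Hm R).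
Local Notation Hh := (@Hh R).
Local Notation good := (@good R).
Local Notation sg := (@sg R).
Local Notation T3 := (@T3 R).
Local Notation Ksum := (@Ksum R).
Local Notation K1 := (@K1 R).
Local Notation T2sum := (@T2sum R).
Ltac m22 := apply/matrixP; let i := fresh "i" in let j := fresh "j" in intros i j;
  case: (ord2P i) => ->; case: (ord2P j) => ->; rewrite ?(mxE, sum2) /=.

Lemma good_unit (u : M2) c : u *m adjoint2 u = c%:M -> c != 0 -> good u.
Proof.
move=> H c0.
have e : forall i j, u i i0 * (u j i0)^* + u i i1 * (u j i1)^* = c *+ (i == j).
  by move=> i j; have := congr1 (fun M : M2 => M i j) H; rewrite /= /adjoint2 !mxE sum2 !mxE.
have e00 := e i0 i0; have e01 := e i0 i1; have e10 := e i1 i0; have e11 := e i1 i1.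
move: e01 e10; rewrite /= mulr1n in e00 e11; rewrite /= mulr0n => e01 e10.
have cz : forall x : C, x^* = 0 -> x = 0 by move=> x /eqP; rewrite conjC_eq0 => /eqP.
case: (eqVneq (u i0 i0) 0) => [z00|n00].
  move: e00 e01; rewrite z00 !mul0r !add0r => e00 e01.
  have n01 : u i0 i1 != 0 by apply: contraNneq c0 => z; rewrite -e00 z mul0r.
  have z11 : u i1 i1 = 0.
    by apply: cz; move/eqP: e01; rewrite mulf_eq0 (negbTE n01) => /eqP.
  move: e11; rewrite z11 /= !mul0r !addr0 => e11.
  have n10 : u i1 i0 != 0 by apply: contraNneq c0 => z; rewrite -e11 z mul0r.
  by apply: Or33; split.
case: (eqVneq (u i1 i1) 0) => [z11|n11].
  move: e11 e10; rewrite z11 !mul0r !addr0 => e11 e10.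
  have n10 : u i1 i0 != 0 by apply: contraNneq c0 => z; rewrite -e11 z mul0r.
  have : (u i0 i0)^* = 0 by move/eqP: e10; rewrite mulf_eq0 (negbTE n10) => /eqP.
  by move/cz => z; rewrite z eqxx in n00.
case: (eqVneq (u i0 i1) 0) => [z01|n01].
  move: e00 e01; rewrite z01 !mul0r !addr0 => e00 e01.
  have : (u i1 i0)^* = 0 by move/eqP: e01; rewrite mulf_eq0 (negbTE n00) => /eqP.
  move/cz => z10; by apply: Or32; split.
case: (eqVneq (u i1 i0) 0) => [z10|n10].
  move: e11 e10; rewrite z10 !mul0r !add0r => e11 e10.
  have : (u i0 i1)^* = 0 by move/eqP: e10; rewrite mulf_eq0 (negbTE n11) => /eqP.
  by move/cz => z; rewrite z eqxx in n01.
apply: Or31 => a b; by case: (ord2P a) => ->; case: (ord2P b) => ->.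
Qed.


Lemma adjoint2M (A B : M2) : adjoint2 (A *m B) = adjoint2 B *m adjoint2 A.
Proof.
rewrite /adjoint2 -trmx_mul; congr (_^T); apply/matrixP => i j; rewrite !mxE !sum2 !mxE.
by rewrite rmorphD !rmorphM.
Qed.

Definition su (X : M2) := exists2 a : C, a != 0 & X *m adjoint2 X = a%:M.

Lemma su_mul3 (A V B : M2) : su A -> unitary2 V -> su B -> su (A *m V *m B).
Proof.
move=> [a a0 HA] HV [b b0 HB]; exists (b * a); first by rewrite mulf_neq0.
rewrite !adjoint2M.
have -> : A *m V *m B *m (adjoint2 B *m (adjoint2 V *m adjoint2 A)) =
    b *: (A *m (V *m adjoint2 V) *m adjoint2 A).
  by rewrite !mulmxA -(mulmxA _ B) HB mul_mx_scalar -!scalemxAl ?mulmxA.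
by rewrite HV mulmx1 HA scale_scalar_mx.
Qed.

Lemma su1 : su 1%:M.
Proof. exists 1; first exact: oner_neq0. by rewrite mul1mx /adjoint2; m22; rewrite ?rmorph1 ?rmorph0. Qed.

Lemma HmE (i j : 'I_2) : Hm i j = sg i j.
Proof. by rewrite /Hm mxE sgE. Qed.

Lemma suHm : su Hm.
Proof.
exists 2%:R; first by rewrite pnatr_eq0.
rewrite /adjoint2; apply/matrixP => i j; rewrite !mxE !sum2 !mxE !sgE.
case: (ord2P i) => ->; case: (ord2P j) => ->; rewrite /sg /= ?rmorphN ?rmorph1; ring.
Qed.

Lemma suHh : su Hh.
Proof.
exists (2%:R^-1); first by rewrite invr_eq0 pnatr_eq0.
rewrite /adjoint2 /Hh; apply/matrixP => i j; rewrite !mxE !sum2 !mxE !sgE.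
case: (ord2P i) => ->; case: (ord2P j) => ->; rewrite /sg /= ?rmorphM ?fmorphV ?rmorphN ?rmorph1 ?rmorph_nat;
  by field.
Qed.


Lemma HH : Hm *m Hh = 1%:M.
Proof. rewrite /Hh; apply/matrixP => i j; rewrite !mxE !sum2 !mxE !sgE.
case: (ord2P i) => ->; case: (ord2P j) => ->; rewrite /sg /=; by field. Qed.

Lemma cnot_form c t k : c != t -> (k == c) || (k == t) ->
  exists o (L L' K K' : M2), [/\ o != k, L *m L' = 1%:M, K *m K' = 1%:M & [/\ su L, su L', su K & su K']] /\
  cnot3 c t = \sum_(a < 2) tens3f (fun i => if i == k then L *m Pm a *m L' else if i == o then K *m Zm a *m K' else 1%:M).
Proof.
move=> ct /orP[/eqP->|/eqP->].
  exists t, 1%:M, 1%:M, Hm, Hh; split.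
    by split; [rewrite eq_sym|rewrite mulmx1|exact: HH|split; [exact: su1|exact: su1|exact: suHm|exact: suHh]].
  rewrite cnot_ctrl //; apply: eq_bigr => a _; apply: tens3f_ext => i.
  by rewrite mulmx1 mul1mx.
exists c, Hm, Hh, 1%:M, 1%:M; split.
  by split; [|exact: HH|rewrite mulmx1|split; [exact: suHm|exact: suHh|exact: su1|exact: su1]].
rewrite cnot_targ //; apply: eq_bigr => a _; apply: tens3f_ext => i.
by rewrite mulmx1 mul1mx.
Qed.

Lemma unitary_unit (V : M2) : unitary2 V -> V \in unitmx.
Proof. by move=> H; case: (mulmx1_unit H). Qed.

Lemma td_mul (P Q : 'I_3 -> M2) U r : tensor_decomp U r ->
  tensor_decomp (tens3f P *m U *m tens3f Q) r.
Proof.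
move=> [A [B [D ->]]].
exists (fun j => P 0 *m A j *m Q 0), (fun j => P 1 *m B j *m Q 1), (fun j => P 2%:R *m D j *m Q 2%:R).
rewrite mulmx_sumr mulmx_suml; apply: eq_bigr => j _.
by rewrite tens3_f !tens3f_mul.
Qed.

Lemma td_transfer (P Q : 'I_3 -> M2) U r : (forall i, P i \in unitmx) -> (forall i, Q i \in unitmx) ->
  tensor_decomp (tens3f P *m U *m tens3f Q) r <-> tensor_decomp U r.
Proof.
move=> HP HQ; split; last exact: td_mul.
move=> H; have := td_mul (fun i => invmx (P i)) (fun i => invmx (Q i)) H.
rewrite !mulmxA tens3f_mul -mulmxA tens3f_mul.
have -> : tens3f (fun i => invmx (P i) *m P i) = 1%:M.
  by rewrite -tens3f1; apply: tens3f_ext => i; rewrite mulVmx.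
have -> : tens3f (fun i => Q i *m invmx (Q i)) = 1%:M.
  by rewrite -tens3f1; apply: tens3f_ext => i; rewrite mulmxV.
by rewrite mul1mx mulmx1.
Qed.


Lemma expand5 (A B D : 'I_3 -> M2) (F G : 'I_2 -> 'I_3 -> M2) :
  tens3f A *m (\sum_(a < 2) tens3f (F a)) *m tens3f B *m (\sum_(b < 2) tens3f (G b)) *m tens3f D =
  \sum_(a < 2) \sum_(b < 2) tens3f (fun i => A i *m F a i *m B i *m G b i *m D i).
Proof.
rewrite mulmx_sumr !mulmx_suml [RHS]exchange_big; apply: eq_bigr => b _.
rewrite mulmx_sumr !mulmx_suml; apply: eq_bigr => a _.
by rewrite !tens3f_mul.
Qed.


Lemma slot3 (k a b i : 'I_3) : k != a -> k != b -> a != b -> i != k -> i != a -> i = b.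
Proof.
by case: (ord3P k) => ->; case: (ord3P a) => ->; case: (ord3P b) => ->; case: (ord3P i) => ->.
Qed.

Lemma third (k o : 'I_3) : k != o -> exists2 z, k != z & o != z.
Proof.
case: (ord3P k) => ->; case: (ord3P o) => -> // _.
- by exists 2%:R. - by exists 1. - by exists 2%:R. - by exists 0. - by exists 1. - by exists 0.
Qed.

Lemma sr_transfer (X Y : 'M[C]_(2*2*2)) r : (forall r, tensor_decomp X r <-> tensor_decomp Y r) ->
  schmidt_rank_is Y r -> schmidt_rank_is X r.
Proof. move=> H [H1 H2]; split; first by apply/H. by move=> r' /H; exact: H2. Qed.

Lemma su_good (A V B : M2) : su A -> unitary2 V -> su B -> good (A *m V *m B).
Proof. by move=> hA hV hB; case: (su_mul3 hA hV hB) => a a0 E; exact: (good_unit E a0). Qed.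


Lemma main_gen (V1 V2 V3 : 'I_3 -> M2) k o1 o2 (L1 L1' J1 J1' L2 L2' J2 J2' : M2) :
  (forall i, unitary2 (V1 i)) -> (forall i, unitary2 (V2 i)) -> (forall i, unitary2 (V3 i)) ->
  o1 != k -> o2 != k -> L1 *m L1' = 1%:M -> J1 *m J1' = 1%:M -> L2 *m L2' = 1%:M -> J2 *m J2' = 1%:M ->
  su L1' -> su L2 -> su J1' -> su J2 ->
  exists r, schmidt_rank_is (tens3f V1 *m
     (\sum_(a < 2) tens3f (fun i => if i == k then L1 *m Pm a *m L1' else if i == o1 then J1 *m Zm a *m J1' else 1%:M))
     *m tens3f V2 *m
     (\sum_(b < 2) tens3f (fun i => if i == k then L2 *m Pm b *m L2' else if i == o2 then J2 *m Zm b *m J2' else 1%:M))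
     *m tens3f V3) r /\ r \in [:: 1; 2; 4]%N.
Proof.
move=> hV1 hV2 hV3 Ho1 Ho2 hL1 hJ1 hL2 hJ2 sL1 sL2 sJ1 sJ2.
rewrite expand5.
pose P i := if i == k then V1 i *m L1 else if i == o1 then V1 i *m J1
   else if i == o2 then V1 i *m V2 i *m J2 else V1 i *m V2 i *m V3 i.
pose Q i := if i == k then L2' *m V3 i else if i == o1 then (if i == o2 then J2' *m V3 i else J1' *m V2 i *m V3 i)
   else if i == o2 then J2' *m V3 i else 1%:M.
pose A (a b : 'I_2) i := if i == k then Pm a *m (L1' *m V2 k *m L2) *m Pm b
   else if i == o1 then (if i == o2 then Zm a *m (J1' *m V2 o1 *m J2) *m Zm b else Zm a)
   else if i == o2 then Zm b else 1%:M.
have k1 : (k == o1) = false by rewrite eq_sym (negbTE Ho1).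
have k2 : (k == o2) = false by rewrite eq_sym (negbTE Ho2).
have EM : \sum_(a < 2) \sum_(b < 2) tens3f (fun i => V1 i *m
      (if i == k then L1 *m Pm a *m L1' else if i == o1 then J1 *m Zm a *m J1' else 1%:M) *m V2 i *m
      (if i == k then L2 *m Pm b *m L2' else if i == o2 then J2 *m Zm b *m J2' else 1%:M) *m V3 i)
   = tens3f P *m (\sum_(a < 2) \sum_(b < 2) tens3f (A a b)) *m tens3f Q.
  rewrite mulmx_sumr mulmx_suml; apply: eq_bigr => a _.
  rewrite mulmx_sumr mulmx_suml; apply: eq_bigr => b _.
  rewrite !tens3f_mul; apply: tens3f_ext => i; rewrite /P /Q /A.
  case: (eqVneq i k) => [->|ik].
    by rewrite ?eqxx !mulmxA.
  rewrite ?(negbTE ik).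
  case: (eqVneq i o1) => [->|io1].
    rewrite ?eqxx; case: (eqVneq o1 o2) => [E12|n12].
      by rewrite ?eqxx !mulmxA.
    by rewrite ?(negbTE n12) !mulmx1 !mulmxA.
  rewrite ?(negbTE io1) !mulmx1.
  case: (eqVneq i o2) => [->|io2].
    by rewrite ?eqxx !mulmxA.
  by rewrite ?(negbTE io2) !mulmx1.
have [uL1 uL1'] := mulmx1_unit hL1.
have [uJ1 uJ1'] := mulmx1_unit hJ1.
have [uL2 uL2'] := mulmx1_unit hL2.
have [uJ2 uJ2'] := mulmx1_unit hJ2.
have uV1 : forall i, V1 i \in unitmx by move=> i; exact: unitary_unit.
have uV2 : forall i, V2 i \in unitmx by move=> i; exact: unitary_unit.
have uV3 : forall i, V3 i \in unitmx by move=> i; exact: unitary_unit.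
have uP : forall i, P i \in unitmx.
  by move=> i; rewrite /P; do 3?[case: ifP => _]; rewrite !unitmx_mul ?uV1 ?uV2 ?uV3 ?uL1 ?uJ1 ?uJ2.
have uQ : forall i, Q i \in unitmx.
  by move=> i; rewrite /Q; do 4?[case: ifP => _]; rewrite ?unitmx1 ?unitmx_mul ?uV1 ?uV2 ?uV3 ?uL2' ?uJ1' ?uJ2'.
have gu : good (L1' *m V2 k *m L2) by apply: su_good.
have gW : good (J1' *m V2 o1 *m J2) by apply: su_good.
rewrite EM.
suff [r [Hr Hm]] : exists r, schmidt_rank_is (\sum_(a < 2) \sum_(b < 2) tens3f (A a b)) r /\ r \in [:: 1; 2; 4]%N.
  exists r; split => //; apply: (sr_transfer _ Hr) => r'; exact: td_transfer.
case: (eqVneq o1 o2) => [E12|n12].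
  have ko : k != o1 by rewrite eq_sym.
  have [z kz oz] := third ko.
  have -> : \sum_(a < 2) \sum_(b < 2) tens3f (A a b) = Ksum k o1 (K1 (L1' *m V2 k *m L2) (J1' *m V2 o1 *m J2)).
    rewrite /Ksum; apply: eq_bigr => a _; apply: eq_bigr => b _.
    have -> : tens3f (A a b) = T3 k o1 (Pm a *m (L1' *m V2 k *m L2) *m Pm b) (Zm a *m (J1' *m V2 o1 *m J2) *m Zm b).
      apply: tens3f_ext => i; rewrite /A -E12; case: (i == k) => //; by case: (i == o1).
    rewrite PuP T3Zl (matrix_sum_delta (Zm a *m (J1' *m V2 o1 *m J2) *m Zm b)) T3_sumr // scaler_sumr.
    apply: eq_bigr => c _; rewrite T3_sumr // scaler_sumr; apply: eq_bigr => d _.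
    by rewrite T3Zr // scalerA.
  exact: (core1 ko kz oz gu gW).
have ko1 : k != o1 by rewrite eq_sym.
have ko2 : k != o2 by rewrite eq_sym.
have -> : \sum_(a < 2) \sum_(b < 2) tens3f (A a b) = T2sum k o1 (L1' *m V2 k *m L2).
  apply: eq_bigr => a _; apply: eq_bigr => b _; apply: tens3f_ext => i; rewrite /A /=.
  case: (eqVneq i k) => [_|ik]; first by [].
  rewrite ?(negbTE ik).
  rewrite ?(negbTE ik); case: (eqVneq i o1) => [->|io1]; first by rewrite ?eqxx (negbTE n12).
  by rewrite ?(negbTE io1) (slot3 ko1 ko2 n12 ik io1) eqxx.
exact: (core2 ko1 ko2 n12 gu).
Qed.

End S3.

Lemma lu_f (R : realType) (L : 'M[complex R]_(2*2*2)) : local_unitary L ->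
  exists V : 'I_3 -> 'M[complex R]_2, (forall i, unitary2 (V i)) /\ L = tens3f V.
Proof.
move=> [V [W [X [hV hW hX ->]]]].
exists (fun i => if i == 0 then V else if i == 1 then W else X); split; last by [].
by move=> i; case: (i == 0) => //; case: (i == 1).
Qed.

Lemma shared (c1 t1 c2 t2 : 'I_3) : c1 != t1 -> c2 != t2 ->
  exists k, ((k == c1) || (k == t1)) && ((k == c2) || (k == t2)).
Proof.
move=> h1 h2.
case: (eqVneq c1 c2) => [<-|n1]; first by exists c1; rewrite eqxx.
case: (eqVneq c1 t2) => [<-|n2]; first by exists c1; rewrite eqxx orbT.
case: (eqVneq t1 c2) => [<-|n3]; first by exists t1; rewrite eqxx orbT.
case: (eqVneq t1 t2) => [<-|n4]; first by exists t1; rewrite eqxx !orbT.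
have e : t1 = c1 by apply: (slot3 h2 _ _ n3 n4); rewrite eq_sym.
by rewrite e eqxx in h1.
Qed.

Theorem theorem6 (R : realType) (L1 L2 L3 : 'M[complex R]_(2 * 2 * 2))
    (c1 t1 c2 t2 : 'I_3) :
  local_unitary L1 -> local_unitary L2 -> local_unitary L3 ->
  c1 != t1 -> c2 != t2 ->
  exists r : nat,
    schmidt_rank_is (L1 *m cnot3 c1 t1 *m L2 *m cnot3 c2 t2 *m L3) r
    /\ r \in [:: 1; 2; 4]%N.
Proof.
move=> /lu_f [V1 [hV1 ->]] /lu_f [V2 [hV2 ->]] /lu_f [V3 [hV3 ->]] h1 h2.
have [k /andP [k1 k2]] := shared h1 h2.
have [o1 [A1 [A1' [B1 [B1' [[ok1 eA1 eB1 [sA1 sA1' sB1 sB1']] ->]]]]]] := @cnot_form R _ _ _ h1 k1.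
have [o2 [A2 [A2' [B2 [B2' [[ok2 eA2 eB2 [sA2 sA2' sB2 sB2']] ->]]]]]] := @cnot_form R _ _ _ h2 k2.
exact: main_gen.
Qed.
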